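(* For any integers $n,m\geq 1$, the order of $1+q^m$ in $(q;q)_n=\prod_{i=1}^n(1-q^i)$ is $\lfloor n/2m\rfloor$; that is, $(1+q^m)^{\lfloor n/2m\rfloor}$ divides $(q;q)_n$ and $(1+q^m)^{\lfloor n/2m\rfloor+1}$ does not divide $(q;q)_n$. *)

(* Defs.v *)
From mathcomp Require Import all_boot all_algebra.
Set Implicit Arguments. Unset Strict Implicit. Unset Printing Implicit Defensive.
Import GRing.Theory.
Local Open Scope ring_scope.

Definition qpoch (n : nat) : {poly int} := \prod_(1 <= i < n.+1) (1 - 'X^i).

Definition zdivides (p f : {poly int}) : Prop := exists r : {poly int}, f = p * r.

(* Main.v *)
Require Import Defs.
From mathcomp Require Import all_boot all_algebra all_field zify ring.
Import GRing.Theory Num.Theory.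
Local Open Scope ring_scope.

Section S.
Variables (m : nat) (z : algC).
Hypothesis hm : (0 < m)%N.
Hypothesis hz : (2 * m)%N.-primitive_root z.

Definition ev (p : {poly int}) : algC := (map_poly intr p).[z].

Lemma evM p q : ev (p * q) = ev p * ev q.
Proof. by rewrite /ev rmorphM hornerM. Qed.

Lemma ev1Xn i : ev (1 - 'X^i) = 1 - z ^+ i.
Proof. by rewrite /ev rmorphB rmorph1 rmorphXn /= map_polyX !hornerE. Qed.
Lemma ev1pXn i : ev (1 + 'X^i) = 1 + z ^+ i.
Proof. by rewrite /ev rmorphD rmorph1 rmorphXn /= map_polyX !hornerE. Qed.
Lemma evXn i : ev 'X^i = z ^+ i.
Proof. by rewrite /ev rmorphXn /= map_polyX !hornerE. Qed.

Lemma evsum k (F : nat -> {poly int}) : ev (\sum_(j < k) F j) = \sum_(j < k) ev (F j).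
Proof. by rewrite /ev rmorph_sum horner_sum. Qed.

Lemma zm : z ^+ m = -1.
Proof.
have h2 : (z ^+ m) ^+ 2 = 1 by rewrite -exprM mulnC prim_expr_order.
have : z ^+ m != 1.
  rewrite -(prim_order_dvd hz); apply/negP => /dvdn_leq.
  by move=> /(_ hm); lia.
move: h2 => /eqP; rewrite sqrf_eq1 => /orP [->//|/eqP->//].
Qed.

Lemma fact1 k : 1 - 'X^(2 * m * k) =
  (1 + 'X^m) * ((1 - 'X^m) * \sum_(j < k) 'X^(2 * m * j)) :> {poly int}.
Proof.
have e : forall j, 'X^(2 * m * j) = ('X^m ^+ 2) ^+ j :> {poly int}.
  by move=> j; rewrite -!exprM; congr (_ ^+ _); lia.
under eq_bigr => j _ do rewrite e.
rewrite e mulrA.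
have -> : (1 + 'X^m) * (1 - 'X^m) = 1 - 'X^m ^+ 2 :> {poly int}.
  by rewrite expr2; ring.
apply: oppr_inj; rewrite opprB subrX1 -mulNr opprB.
done.
Qed.

Lemma key n : exists s, qpoch n = (1 + 'X^m) ^+ (n %/ (2 * m)) * s /\ ev s != 0.
Proof.
elim: n => [|n [s [Hs Hev]]].
  exists 1; rewrite /qpoch big_geq // div0n expr0 mulr1; split => //.
  by rewrite /ev rmorph1 hornerE oner_neq0.
have d0 : (0 < 2 * m)%N by rewrite muln_gt0.
have eq : qpoch n.+1 = qpoch n * (1 - 'X^(n.+1)) by rewrite /qpoch big_nat_recr.
rewrite eq Hs divnS //.
case: (boolP ((2 * m) %| n.+1)%N) => hd /=.
  have hk := divnK hd; set k := (n.+1 %/ (2 * m))%N in hk.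
  have k0 : (0 < k)%N.
    by rewrite lt0n; apply/negP => /eqP k0; move: hk; rewrite k0 mul0n.
  rewrite -hk (mulnC k) fact1.
  exists (s * ((1 - 'X^m) * \sum_(j < k) 'X^(2 * m * j))); split.
    by rewrite add1n exprS; ring.
  rewrite !evM mulf_neq0 //; last rewrite mulf_neq0 //.
    by rewrite ev1Xn zm opprK -(natrD _ 1 1) pnatr_eq0.
  rewrite (evsum k (fun j => 'X^(2 * m * j))) (eq_bigr (fun _ => 1)); last first.
    by move=> j _; rewrite evXn exprM (prim_expr_order hz) expr1n.
  by rewrite sumr_const card_ord pnatr_eq0 -lt0n.
exists (s * (1 - 'X^(n.+1))); split; first by rewrite add0n mulrA.
rewrite evM mulf_neq0 // ev1Xn subr_eq0 eq_sym -(prim_order_dvd hz) //.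
Qed.
End S.

Theorem lemma4p4 (n m : nat) (hn : (1 <= n)%N) (hm : (1 <= m)%N) :
  zdivides ((1 + 'X^m) ^+ (n %/ (2 * m))) (qpoch n) /\
  ~ zdivides ((1 + 'X^m) ^+ (n %/ (2 * m)).+1) (qpoch n).
Proof.
have d0 : (0 < 2 * m)%N by rewrite muln_gt0.
have [z hz] := C_prim_root_exists d0.
have [s [Hs Hev]] := @key m z hm hz n.
split; first by exists s.
move=> [r Hr].
have P0 : (1 + 'X^m : {poly int}) != 0.
  apply/negP => /eqP h.
  have := congr1 (fun p : {poly int} => p.[1]) h.
  by rewrite !hornerE expr1n.
move: Hr; rewrite Hs exprSr -mulrA => H; have hs := mulfI (expf_neq0 _ P0) H.
move: Hev; rewrite hs evM /ev rmorphD rmorph1 /= rmorphXn /= map_polyX !hornerE.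
by rewrite (@zm m z hm hz) subrr mul0r eqxx.
Qed.
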